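(* Let $A=(a_{i,j})$ be a symmetric $n\times n$ matrix with nonnegative entries (the weighted adjacency matrix of an undirected graph, self-loops allowed) with $\deg(i)=\sum_{j=1}^n a_{i,j}>0$ for all $i$. For each $i$ let $h_i:[0,1]\to[0,1]$ be a bijective, monotonically increasing function, and define $F:[0,1]^n\to[0,1]^n$ by $F_i(\beta)=h_i(\mu_i)$ with $\mu_i=\frac{1}{\deg(i)}\sum_{j=1}^n a_{i,j}\beta_j$. Then there exists a differentiable function $V:[0,1]^n\to\mathbb{R}$ with $V\ge 0$ such that for all $\beta\in[0,1]^n$, $$\langle F(\beta)-\beta,\nabla V(\beta)\rangle\le 0,$$ with equality if and only if $F(\beta)=\beta$.
   Context: In the paper $h_i=h(\cdot,\gamma_i)$ for a family of functions indexed by parameters $\gamma_i$. *)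

(* Defs.v *)
From HB Require Import structures.
From mathcomp Require Import all_boot all_order all_algebra.
From mathcomp Require Import all_classical all_reals all_analysis.
Set Implicit Arguments. Unset Strict Implicit. Unset Printing Implicit Defensive.
Import Order.TTheory GRing.Theory Num.Theory.
Import numFieldNormedType.Exports.
Local Open Scope classical_set_scope.
Local Open Scope ring_scope.

Section Defs.
Context {R : realType} {n : nat}.

Definition cube : set 'rV[R]_n := [set b | forall j : 'I_n, 0 <= b ord0 j <= 1].

Definition deg (A : 'M[R]_n) (i : 'I_n) : R := \sum_(j < n) A i j.

Definition mu (A : 'M[R]_n) (b : 'rV[R]_n) (i : 'I_n) : R :=
  (\sum_(j < n) A i j * b ord0 j) / deg A i.

Definition Fmap (A : 'M[R]_n) (h : 'I_n -> R -> R) (b : 'rV[R]_n) : 'rV[R]_n :=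
  \row_i h i (mu A b i).

Definition grad (V : 'rV[R]_n -> R) (b : 'rV[R]_n) : 'rV[R]_n :=
  \row_j derive V b (delta_mx ord0 j : 'rV[R]_n).

Definition dotv (u v : 'rV[R]_n) : R := \sum_(j < n) u ord0 j * v ord0 j.

End Defs.

(* Main.v *)
Require Import Defs.
From HB Require Import structures.
From mathcomp Require Import all_boot all_order all_algebra.
From mathcomp Require Import all_classical all_reals all_analysis.
From mathcomp Require Import lra ring.
Import Order.TTheory GRing.Theory Num.Theory.
Import numFieldNormedType.Exports.
Local Open Scope classical_set_scope.
Local Open Scope ring_scope.

Section K.
Context {R : realType}.
Variable f : R -> R.
Hypothesis fbij : set_bij `[0%R, 1%R] `[0%R, 1%R] f.
Hypothesis fhomo : {in `[0%R, 1%R] &, {homo f : x y / x <= y}}.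

Definition ginv (y : R) : R :=
  match pselect (exists x, 0 <= x <= 1 /\ f x = y) with
  | left e => projT1 (cid e)
  | right _ => 0 end.

Lemma ginvP y : 0 <= y <= 1 -> 0 <= ginv y <= 1 /\ f (ginv y) = y.
Proof.
move=> y01; rewrite /ginv; case: pselect => [e|ne].
  by case: (cid e).
exfalso; apply: ne; case: fbij => _ _ /(_ y).
have : `[0%R, 1%R]%classic y by rewrite /= in_itv.
move=> H /(_ H) [x /= xin fx]; exists x; split => //.
Qed.

Lemma ginvK x : 0 <= x <= 1 -> ginv (f x) = x.
Proof.
move=> x01; case: fbij => fun_ inj _.
have fx01 : 0 <= f x <= 1.
  have := fun_ x; rewrite /= in_itv => /(_ _); rewrite in_itv; apply; exact: x01.
have [g01 fg] := ginvP _ fx01.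
by apply: inj; rewrite ?inE /= ?in_itv.
Qed.

Definition cf (t : R) : R := if (0 <= t <= 1) then ginv t else t.

Lemma cf_lt x y : x < y -> cf x < cf y.
Proof.
move=> xy; rewrite /cf.
case: ifP => hx; case: ifP => hy.
- have [gx fgx] := ginvP _ hx; have [gy fgy] := ginvP _ hy.
  rewrite ltNge; apply/negP => le.
  have : f (ginv y) <= f (ginv x) by apply: fhomo; rewrite // in_itv.
  rewrite fgx fgy => /(lt_le_trans xy); by rewrite ltxx.
- have [gx _] := ginvP _ hx; move/negbT: hy; rewrite negb_and -!ltNge => /orP[]; lra.
- have [gy _] := ginvP _ hy; move/negbT: hx; rewrite negb_and -!ltNge => /orP[]; lra.
- done.
Qed.

Lemma cf_le : {mono cf : x y / x <= y}.
Proof. exact: (le_mono cf_lt). Qed.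


Definition kf (t : R) : R := cf t + 1.

Lemma kf_le : {mono kf : x y / x <= y}.
Proof. by move=> x y; rewrite /kf lerD2r cf_le. Qed.

Lemma kfN1 : kf (-1) = 0.
Proof. rewrite /kf /cf; case: ifP => [/andP[]|_]; lra. Qed.

Lemma kf2 : kf 2 = 3.
Proof. rewrite /kf /cf; case: ifP => [/andP[]|_]; lra. Qed.

Lemma kf_surj : set_surj `[(-1)%R, 2%R] `[kf (-1), kf 2] kf.
Proof.
rewrite kfN1 kf2 => z /=; rewrite in_itv /= => /andP[z0 z3].
case: fbij => fun_ inj _.
have [w01|wn] := boolP (0 <= z - 1 <= 1).
  have fw : 0 <= f (z - 1) <= 1.
    by have := fun_ (z - 1); rewrite /= !in_itv; apply.
  exists (f (z - 1)).
    by rewrite /= in_itv /=; move/andP: fw => []; lra.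
  by rewrite /kf /cf fw ginvK //; lra.
exists (z - 1); first by rewrite /= in_itv /=; lra.
by rewrite /kf /cf (negbTE wn); lra.
Qed.

Lemma kf_within : {within `[(-1)%R, 2%R], continuous kf}.
Proof.
apply: segment_inc_surj_continuous; last exact: kf_surj.
by move=> x y _ _; exact: kf_le.
Qed.

Lemma kf_cont x : -1 < x < 2 -> {for x, continuous kf}.
Proof.
move=> hx.
have n12 : (-1 : R) < 2 by lra.
have [H _ _] := (continuous_within_itvP kf n12).1 kf_within.
by apply: H; rewrite in_itv /= hx.
Qed.

Lemma kf_int : (@lebesgue_measure R).-integrable `[(-1)%R, 2%R] (EFin \o kf).
Proof.
apply: continuous_compact_integrable; first exact: segment_compact.
exact: kf_within.
Qed.

Definition KI (x : R) : R :=
  (\int[@lebesgue_measure R]_(t in [set` `[(-1)%R, x]]) (kf t))%R.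

Lemma KI_deriv x : -1 < x < 2 -> derivable KI x 1 /\ derive1 KI x = kf x.
Proof.
move=> hx; have kc := kf_cont _ hx; case/andP: hx => h1 h2.
have := @continuous_FTC1_closed R kf (-1) x 2 h2 kf_int h1 kc.
by [].
Qed.

Lemma KI_ge0 x : 0 <= KI x.
Proof.
apply: Rintegral_ge0 => t /=; rewrite in_itv /= => /andP[t1 _].
by rewrite -kfN1 kf_le.
Qed.

Lemma kf_ginv t : 0 <= t <= 1 -> kf t = ginv t + 1.
Proof. by move=> t01; rewrite /kf /cf t01. Qed.

End K.
Section D.
Context {R : realType} {n : nat}.

Definition Pc (i : 'I_n) := fun b : 'rV[R]_n => b ord0 i.

Lemma Pc_lin (i : 'I_n) : linear (Pc i).
Proof. by move=> a x y; rewrite /Pc !mxE. Qed.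

Lemma is_derive_Pc (i : 'I_n) (b v : 'rV[R]_n) : is_derive b v (Pc i) (v ord0 i).
Proof.
have @f : {linear 'rV[R]_n -> R}.
  by exists (Pc i); do 2![eexists]; do ?[constructor];
     rewrite /Pc ?mxE// => ? *; rewrite ?mxE//; move=> ?; rewrite !mxE.
have fE : Pc i = f by [].
have df : differentiable (Pc i) b by exact: differentiable_coord.
apply: DeriveDef; first exact: diff_derivable.
rewrite deriveE // fE diff_lin //.
exact: coord_continuous.
Qed.

Lemma is_derive_comp_Pc (g : R -> R) (i : 'I_n) (b v : 'rV[R]_n) :
  derivable g (b ord0 i) 1 ->
  is_derive b v (g \o Pc i) (v ord0 i * derive1 g (b ord0 i)).
Proof.
move=> dg.
have @f : {linear 'rV[R]_n -> R}.
  by exists (Pc i); do 2![eexists]; do ?[constructor];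
     rewrite /Pc ?mxE// => ? *; rewrite ?mxE//; move=> ?; rewrite !mxE.
have fE : Pc i = f by [].
have df : differentiable (Pc i) b by exact: differentiable_coord.
have dg' : differentiable g (Pc i b) by apply/derivable1_diffP.
have dgf : differentiable (g \o Pc i) b by exact: differentiable_comp.
apply: DeriveDef; first exact: diff_derivable.
have dP : 'd (Pc i) b = Pc i :> (_ -> _).
  by rewrite fE diff_lin //; exact: coord_continuous.
rewrite deriveE // diff_comp // deriv1E //= dP.
done.
Qed.

End D.


Lemma sum_delta {R : realType} {n : nat} (F : 'I_n -> R) (k : 'I_n) :
  \sum_(i < n) ((delta_mx ord0 k : 'rV[R]_n) ord0 i * F i) = F k.
Proof.
rewrite (bigD1 k) //= mxE !eqxx mul1r big1 ?addr0 // => i ik.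
by rewrite mxE eqxx /= (negbTE ik) mul0r.
Qed.

Lemma term_le0 {R : realType} (f : R -> R) (d t m : R) :
  set_bij `[0%R, 1%R] `[0%R, 1%R] f ->
  {in `[0%R, 1%R] &, {homo f : x y / x <= y}} ->
  0 < d -> 0 <= t <= 1 -> 0 <= m <= 1 ->
  (f m - t) * (d * (ginv f t - m)) <= 0 /\
  ((f m - t) * (d * (ginv f t - m)) = 0 <-> f m = t).
Proof.
move=> fb fh d0 t01 m01.
have [s01 fs] := @ginvP R f fb t t01.
set s := ginv f t in s01 fs *.
have sm_le : s <= m -> f s <= f m by move=> sm; apply: fh; rewrite // in_itv.
have ms_le : m <= s -> f m <= f s by move=> sm; apply: fh; rewrite // in_itv.
split.
  have [sm|ms] := leP s m.
    apply: mulr_ge0_le0; first by rewrite subr_ge0 -fs sm_le.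
    by apply: mulr_ge0_le0; [exact: ltW|rewrite subr_le0].
  apply: mulr_le0_ge0; first by rewrite subr_le0 -fs ms_le // ltW.
  by apply: mulr_ge0; [exact: ltW|rewrite subr_ge0 ltW].
split; last by move=> ->; rewrite subrr mul0r.
move/eqP; rewrite mulf_eq0 => /orP[|]; first by rewrite subr_eq0 => /eqP.
rewrite mulf_eq0 (gt_eqF d0) /= subr_eq0 => /eqP sm.
by rewrite -sm fs.
Qed.

Theorem theorem1 (R : realType) (n : nat) (A : 'M[R]_n) (h : 'I_n -> R -> R) :
  A^T = A ->
  (forall i j, 0 <= A i j) ->
  (forall i, 0 < deg A i) ->
  (forall i, set_bij `[0%R, 1%R] `[0%R, 1%R] (h i)) ->
  (forall i, {in `[0%R, 1%R] &, {homo h i : x y / x <= y}}) ->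
  exists V : 'rV[R]_n -> R,
    (forall b, cube b -> differentiable V b) /\
    (forall b, cube b -> 0 <= V b) /\
    (forall b, cube b ->
       dotv (Fmap A h b - b) (grad V b) <= 0 /\
       (dotv (Fmap A h b - b) (grad V b) = 0 <-> Fmap A h b = b)).
Proof.
move=> AT A0 deg0 hb hm.
have Asym i j : A i j = A j i by rewrite -{1}AT mxE.
pose T (i : 'I_n) : 'rV[R]_n -> R :=
  cst (deg A i) * ((KI (h i) \o Pc i) - Pc i + cst 1).
pose Q (i j : 'I_n) : 'rV[R]_n -> R :=
  cst (A i j / 2) * (cst 1 - Pc i * Pc j).
pose V := \sum_(i < n) T i + \sum_(i < n) \sum_(j < n) Q i j.
have KId i x : 0 <= x <= 1 -> derivable (KI (h i)) x 1 /\
    derive1 (KI (h i)) x = ginv (h i) x + 1.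
  move=> x01; have x12 : -1 < x < 2 by move/andP: x01 => []; lra.
  have [d e] := @KI_deriv R (h i) (hb i) (hm i) x x12.
  by split => //; rewrite e kf_ginv.
exists V; split.
  move=> b cb; apply: differentiableD; apply: differentiable_sum => i.
    apply: differentiableM; first exact: differentiable_cst.
    apply: differentiableD; last exact: differentiable_cst.
    apply: differentiableB; last exact: differentiable_coord.
    apply: differentiable_comp; first exact: differentiable_coord.
    by apply/derivable1_diffP; have [] := KId i _ (cb i).
  apply: differentiable_sum => j.
  apply: differentiableM; first exact: differentiable_cst.
  apply: differentiableB; first exact: differentiable_cst.
  by apply: differentiableM; exact: differentiable_coord.
split.
  move=> b cb; rewrite /V /T /Q addrfctE !fct_sumE.
  apply: addr_ge0; apply: sumr_ge0 => i _.
    rewrite mulrfctE; apply: mulr_ge0; first exact: (ltW (deg0 i)).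
    rewrite !addrfctE /= /Pc opprfctE.
    have := @KI_ge0 R (h i) (hb i) (hm i) (b ord0 i); have := cb i. lra.
  rewrite fct_sumE; apply: sumr_ge0 => j _.
  rewrite mulrfctE; apply: mulr_ge0; first by rewrite /= divr_ge0.
  rewrite /= /Pc addrfctE opprfctE mulrfctE /=; have /andP[? ?] := cb i; have /andP[? ?] := cb j. nra.
move=> b cb.
have dT i v : is_derive b v (T i) (deg A i * (v ord0 i * ginv (h i) (b ord0 i))).
  have IK : is_derive b v (KI (h i) \o Pc i)
      (v ord0 i * derive1 (KI (h i)) (b ord0 i)).
    by apply: is_derive_comp_Pc; exact: (KId i _ (cb i)).1.
  have IP : is_derive b v (Pc i) (v ord0 i) := is_derive_Pc i b v.
  rewrite /T; apply: is_derive_eq.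
  rewrite (KId i _ (cb i)).2 scaler0 !addr0 /cst -[_ *: _]/(_ * _).
  ring.
have dQ i j v : is_derive b v (Q i j)
    (- (A i j / 2) * (v ord0 i * b ord0 j) - (A i j / 2) * (b ord0 i * v ord0 j)).
  have IPi : is_derive b v (Pc i) (v ord0 i) := is_derive_Pc i b v.
  have IPj : is_derive b v (Pc j) (v ord0 j) := is_derive_Pc j b v.
  rewrite /Q; apply: is_derive_eq.
  rewrite /cst /Pc -![_ *: _]/(_ * _) /=. ring.
have HV v : is_derive b v V
    (\sum_(i < n) deg A i * (v ord0 i * ginv (h i) (b ord0 i)) +
     \sum_(i < n) \sum_(j < n) (- (A i j / 2) * (v ord0 i * b ord0 j)
                                - (A i j / 2) * (b ord0 i * v ord0 j))).
  apply: is_deriveD.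
have gradE k : grad V b ord0 k = deg A k * (ginv (h k) (b ord0 k) - mu A b k).
  rewrite /grad mxE derive_val.
  set e := (delta_mx ord0 k : 'rV[R]_n).
  rewrite (eq_bigr (fun i => e ord0 i * (deg A i * ginv (h i) (b ord0 i))));
    last by move=> i _; ring.
  rewrite sum_delta.
  under eq_bigr => i _ do rewrite big_split /=.
  rewrite big_split /=.
  have P1 : \sum_(i < n) \sum_(j < n) (- (A i j / 2) * (e ord0 i * b ord0 j)) =
            \sum_(j < n) (- (A k j / 2) * b ord0 j).
    rewrite -(sum_delta (fun i => \sum_(j < n) (- (A i j / 2) * b ord0 j)) k).
    apply: eq_bigr => i _; rewrite mulr_sumr; apply: eq_bigr => j _; ring.
  have P2 : \sum_(i < n) \sum_(j < n) (- (A i j / 2 * (b ord0 i * e ord0 j))) =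
            \sum_(j < n) (- (A k j / 2) * b ord0 j).
    rewrite exchange_big /=.
    under [RHS]eq_bigr => j _ do rewrite Asym.
    rewrite -(sum_delta (fun j => \sum_(i < n) (- (A i j / 2) * b ord0 i)) k).
    apply: eq_bigr => j _; rewrite mulr_sumr; apply: eq_bigr => i _; ring.
  have S : \sum_(j < n) (- (A k j / 2) * b ord0 j) = - (\sum_(j < n) A k j * b ord0 j) / 2.
    rewrite -sumrN mulr_suml; apply: eq_bigr => j _; ring.
  rewrite P1 P2 S /mu.
  have dk : deg A k != 0 by rewrite gt_eqF // deg0.
  field.
  exact: dk.
have mu01 k : 0 <= mu A b k <= 1.
  rewrite /mu; have dk := deg0 k; apply/andP; split.
    apply: divr_ge0; last exact: ltW.
    apply: sumr_ge0 => j _; apply: mulr_ge0 => //; by have /andP[] := cb j.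
  rewrite ler_pdivrMr // mul1r /deg; apply: ler_sum => j _.
  have /andP[b0 b1] := cb j; rewrite ler_piMr //.
pose term k := (h k (mu A b k) - b ord0 k) *
               (deg A k * (ginv (h k) (b ord0 k) - mu A b k)).
have dotE : dotv (Fmap A h b - b) (grad V b) = \sum_(k < n) term k.
  by rewrite /dotv; apply: eq_bigr => k _; rewrite gradE !mxE.
have tl k := @term_le0 R (h k) (deg A k) (b ord0 k) (mu A b k) (hb k) (hm k) (deg0 k) (cb k) (mu01 k).
rewrite dotE; split.
  rewrite -oppr_ge0 -sumrN; apply: sumr_ge0 => k _.
  by rewrite oppr_ge0; exact: (tl k).1.
split.
  move=> s0; apply/rowP => k; rewrite !mxE; apply/(tl k).2.
  have H : \sum_(k < n) - term k = 0 by rewrite sumrN s0 oppr0.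
  have NN : forall i, predT i -> 0 <= - term i.
    by move=> i _; rewrite oppr_ge0; exact: (tl i).1.
  have := @psumr_eq0P _ _ predT (fun k => - term k) NN H k isT.
  by move=> /eqP; rewrite oppr_eq0 => /eqP.
move=> Fb; apply: big1 => k _; apply/(tl k).2.
by move/rowP: Fb => /(_ k); rewrite !mxE.
Qed.
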